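(* For every smooth Jordan curve $\Gamma\subset \mathbb{R}^2$ there exists $\nu>0$ with the following property. If $A\subset\Gamma$ is a finite $\nu$-dense set in $\Gamma$ and $\varphi\colon A\to X$ is a $\lambda$-Lipschitz map to a geodesic metric space $X$, then the piecewise geodesic extension $\bar{\varphi}\colon \Gamma\to X$ of $\varphi$ is $3\lambda$-Lipschitz.
   Context: $\Gamma$ and $A$ carry the Euclidean metric of $\mathbb{R}^2$. A subset $A\subset B$ is $\nu$-dense in $B$ if every point of $B$ is within distance $\nu$ of a point of $A$. The piecewise geodesic extension $\bar\varphi$ agrees with $\varphi$ on $A$, and on each arc of $\Gamma$ between two consecutive points $a,a'$ of $A$ it is a geodesic from $\varphi(a)$ to $\varphi(a')$ parametrized proportionally to the arc length of $\Gamma$. *)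

(* Defs.v *)
From Stdlib Require Import Reals Lra List.
From Coquelicot Require Import Coquelicot.
Open Scope R_scope.

Definition pt := (R * R)%type.
Definition edist (p q : pt) : R :=
  sqrt ((fst p - fst q) ^ 2 + (snd p - snd q) ^ 2).

(* gamma : R -> R^2 is a smooth (C^infinity) Jordan curve of length L > 0,
   parametrized by arc length: L-periodic, injective on [0, L), unit speed. *)
Definition smooth_fun (f : R -> R) : Prop := forall n t, ex_derive_n f n t.

Definition smooth_jordan_arclength (gamma : R -> pt) (L : R) : Prop :=
  0 < L /\
  smooth_fun (fun t => fst (gamma t)) /\
  smooth_fun (fun t => snd (gamma t)) /\
  (forall t, gamma (t + L) = gamma t) /\
  (forall s t, 0 <= s < L -> 0 <= t < L -> gamma s = gamma t -> s = t) /\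
  (forall t, (Derive (fun u => fst (gamma u)) t) ^ 2
           + (Derive (fun u => snd (gamma u)) t) ^ 2 = 1).

Definition on_curve (gamma : R -> pt) (p : pt) : Prop := exists t, gamma t = p.

Definition is_metric {X : Type} (d : X -> X -> R) : Prop :=
  (forall x y, 0 <= d x y) /\
  (forall x y, d x y = 0 <-> x = y) /\
  (forall x y, d x y = d y x) /\
  (forall x y z, d x z <= d x y + d y z).

Definition is_geodesic {X : Type} (d : X -> X -> R) (g : R -> X) (x y : X) : Prop :=
  g 0 = x /\ g 1 = y /\
  (forall s t, 0 <= s <= 1 -> 0 <= t <= 1 -> d (g s) (g t) = Rabs (s - t) * d x y).

Definition geodesic_space {X : Type} (d : X -> X -> R) : Prop :=
  forall x y, exists g : R -> X, is_geodesic d g x y.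

Definition dense_in_curve (gamma : R -> pt) (A : list pt) (nu : R) : Prop :=
  forall p, on_curve gamma p -> exists a, In a A /\ edist p a <= nu.

Definition lipschitz_on {X : Type} (d : X -> X -> R) (S : pt -> Prop)
  (f : pt -> X) (lam : R) : Prop :=
  forall p q, S p -> S q -> d (f p) (f q) <= lam * edist p q.

(* phibar is a piecewise geodesic extension of phi : A -> X along Gamma:
   it agrees with phi on A, and on each arc gamma([s, s']) between two
   consecutive points gamma s, gamma s' of A (s < s' <= s + L, no point of A
   at parameters strictly between) it is a geodesic from phi(gamma s) to
   phi(gamma s') parametrized proportionally to arc length. *)
Definition pw_geodesic_ext {X : Type} (d : X -> X -> R) (gamma : R -> pt) (L : R)
  (A : list pt) (phi phibar : pt -> X) : Prop :=
  (forall a, In a A -> phibar a = phi a) /\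
  (forall s s', s < s' -> s' <= s + L ->
     In (gamma s) A -> In (gamma s') A ->
     (forall u, s < u < s' -> ~ In (gamma u) A) ->
     exists g : R -> X, is_geodesic d g (phi (gamma s)) (phi (gamma s')) /\
       forall t, s <= t <= s' -> phibar (gamma t) = g ((t - s) / (s' - s))).

(* Main.v *)
Require Import Defs.
From Stdlib Require Import Reals Lra Lia Psatz List ZArith IndefiniteDescription Classical.
From Coquelicot Require Import Coquelicot.
Open Scope R_scope.

Lemma edist_sym p q : edist p q = edist q p.
Proof. unfold edist. f_equal. ring. Qed.

Lemma edist_ge0 p q : 0 <= edist p q.
Proof. apply sqrt_pos. Qed.

Lemma edist_refl p : edist p p = 0.
Proof. unfold edist. replace ((fst p - fst p) ^ 2 + (snd p - snd p) ^ 2) with 0 by ring. apply sqrt_0. Qed.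

Lemma edist_tri p q r : edist p r <= edist p q + edist q r.
Proof.
  unfold edist.
  set (a := fst p - fst q). set (b := fst q - fst r).
  set (c := snd p - snd q). set (e := snd q - snd r).
  replace (fst p - fst r) with (a + b) by (unfold a, b; ring).
  replace (snd p - snd r) with (c + e) by (unfold c, e; ring).
  assert (H1 : 0 <= a ^ 2 + c ^ 2) by nra.
  assert (H2 : 0 <= b ^ 2 + e ^ 2) by nra.
  pose proof (sqrt_pos (a ^ 2 + c ^ 2)) as P1.
  pose proof (sqrt_pos (b ^ 2 + e ^ 2)) as P2.
  pose proof (sqrt_sqrt _ H1) as S1.
  pose proof (sqrt_sqrt _ H2) as S2.
  set (r1 := sqrt (a ^ 2 + c ^ 2)) in *.
  set (r2 := sqrt (b ^ 2 + e ^ 2)) in *.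
  assert (K : a * b + c * e <= r1 * r2).
  { assert (Q : (a * b + c * e) ^ 2 <= (r1 * r2) ^ 2).
    { replace ((r1 * r2) ^ 2) with ((r1 * r1) * (r2 * r2)) by ring.
      rewrite S1, S2. pose proof (pow2_ge_0 (a * e - c * b)). nra. }
    pose proof (Rmult_le_pos _ _ P1 P2). destruct (Rle_dec (a * b + c * e) (r1 * r2)) as [?|N]; auto. exfalso. apply Rnot_le_lt in N. nra. }
  rewrite <- (sqrt_square (r1 + r2)) by lra.
  apply sqrt_le_1_alt. ring_simplify. nra.
Qed.


Lemma per_nat (gamma : R -> pt) (L : R) :
  (forall t, gamma (t + L) = gamma t) ->
  forall n t, gamma (t + INR n * L) = gamma t.
Proof.
  intros Hp n. induction n as [|n IH]; intros t.
  - simpl. f_equal. ring.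
  - rewrite S_INR. replace (t + (INR n + 1) * L) with ((t + INR n * L) + L) by ring.
    rewrite Hp. apply IH.
Qed.

Lemma per_Z (gamma : R -> pt) (L : R) :
  (forall t, gamma (t + L) = gamma t) ->
  forall k t, gamma (t + IZR k * L) = gamma t.
Proof.
  intros Hp k t.
  destruct (Z_le_gt_dec 0 k) as [Hk|Hk].
  - rewrite <- (Z2Nat.id k Hk). rewrite <- INR_IZR_INZ. apply per_nat; auto.
  - assert (E : k = (- Z.of_nat (Z.to_nat (- k)))%Z) by lia.
    rewrite E, opp_IZR, <- INR_IZR_INZ.
    set (n := Z.to_nat (-k)).
    rewrite <- (per_nat gamma L Hp n (t + - INR n * L)).
    f_equal. ring.
Qed.

Lemma reduce_mod (L t : R) : 0 < L -> exists k t0, 0 <= t0 < L /\ t = t0 + IZR k * L.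
Proof.
  intros HL. destruct (base_Int_part (t / L)) as [B1 B2].
  exists (Int_part (t / L)), (t - IZR (Int_part (t / L)) * L).
  set (k := IZR (Int_part (t / L))) in *.
  assert (E : t = (t / L) * L) by (field; lra).
  split; [|ring]. split; nra.
Qed.

Lemma same_point (gamma : R -> pt) (L : R) :
  smooth_jordan_arclength gamma L ->
  forall v w, gamma v = gamma w -> exists k, v = w + IZR k * L.
Proof.
  intros [HL [_ [_ [Hp [Hinj _]]]]] v w E.
  destruct (reduce_mod L v HL) as [k1 [v0 [Hv0 Ev]]].
  destruct (reduce_mod L w HL) as [k2 [w0 [Hw0 Ew]]].
  assert (G : gamma v0 = gamma w0).
  { rewrite <- (per_Z gamma L Hp k1 v0), <- (per_Z gamma L Hp k2 w0), <- Ev, <- Ew. exact E. }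
  pose proof (Hinj v0 w0 Hv0 Hw0 G) as F. subst w0.
  exists (k1 - k2)%Z. rewrite minus_IZR. lra.
Qed.
Lemma ex_der_cont (f : R -> R) x : ex_derive f x -> continuity_pt f x.
Proof. intros H. apply continuity_pt_filterlim. apply (ex_derive_continuous f x H). Qed.

Lemma lin_deriv (gamma : R -> pt) (e1 e2 : R) v :
  ex_derive (fun u => fst (gamma u)) v -> ex_derive (fun u => snd (gamma u)) v ->
  is_derive (fun u => e1 * fst (gamma u) + e2 * snd (gamma u)) v
     (e1 * Derive (fun u => fst (gamma u)) v + e2 * Derive (fun u => snd (gamma u)) v).
Proof.
  intros H1 H2.
  apply (is_derive_plus (fun u => e1 * fst (gamma u)) (fun u => e2 * snd (gamma u))).
  - apply is_derive_scal. apply Derive_correct. exact H1.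
  - apply is_derive_scal. apply Derive_correct. exact H2.
Qed.

Lemma lin_mvt (gamma : R -> pt) (e1 e2 t u : R) :
  (forall v, ex_derive (fun u => fst (gamma u)) v) ->
  (forall v, ex_derive (fun u => snd (gamma u)) v) ->
  exists c, Rmin t u <= c <= Rmax t u /\
    (e1 * fst (gamma u) + e2 * snd (gamma u)) - (e1 * fst (gamma t) + e2 * snd (gamma t))
    = (e1 * Derive (fun u => fst (gamma u)) c + e2 * Derive (fun u => snd (gamma u)) c) * (u - t).
Proof.
  intros H1 H2.
  destruct (MVT_gen (fun u => e1 * fst (gamma u) + e2 * snd (gamma u)) t u
    (fun c => e1 * Derive (fun u => fst (gamma u)) c + e2 * Derive (fun u => snd (gamma u)) c))
    as [c [Hc E]].
  - intros x _. apply lin_deriv; auto.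
  - intros x _. apply ex_der_cont. eexists. apply lin_deriv; auto.
  - exists c. split; auto.
Qed.

Lemma lip1 (gamma : R -> pt) (L : R) :
  smooth_jordan_arclength gamma L ->
  forall t u, edist (gamma t) (gamma u) <= Rabs (t - u).
Proof.
  intros [HL [Hx [Hy [Hp [Hinj Hun]]]]] t u.
  assert (D1 : forall v, ex_derive (fun u => fst (gamma u)) v) by (intro v; exact (Hx 1%nat v)).
  assert (D2 : forall v, ex_derive (fun u => snd (gamma u)) v) by (intro v; exact (Hy 1%nat v)).
  set (e1 := fst (gamma u) - fst (gamma t)).
  set (e2 := snd (gamma u) - snd (gamma t)).
  destruct (lin_mvt gamma e1 e2 t u D1 D2) as [c [_ E]].
  pose proof (Hun c) as U.
  set (a := Derive (fun u => fst (gamma u)) c) in *.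
  set (b := Derive (fun u => snd (gamma u)) c) in *.
  unfold edist.
  replace ((fst (gamma t) - fst (gamma u)) ^ 2 + (snd (gamma t) - snd (gamma u)) ^ 2)
    with (e1 ^ 2 + e2 ^ 2) by (unfold e1, e2; ring).
  assert (S0 : 0 <= e1 ^ 2 + e2 ^ 2) by nra.
  pose proof (sqrt_sqrt _ S0) as S. pose proof (sqrt_pos (e1 ^ 2 + e2 ^ 2)) as P.
  set (r := sqrt (e1 ^ 2 + e2 ^ 2)) in *.
  assert (E' : e1 ^ 2 + e2 ^ 2 = (e1 * a + e2 * b) * (u - t)) by (rewrite <- E; unfold e1, e2; ring).
  assert (CS : (e1 * a + e2 * b) ^ 2 <= r * r).
  { rewrite S. pose proof (pow2_ge_0 (e1 * b - e2 * a)). nra. }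
  assert (B : Rabs (e1 * a + e2 * b) <= r).
  { destruct (Rcase_abs (e1 * a + e2 * b)) as [N|N];
    [rewrite Rabs_left by lra | rewrite Rabs_pos_eq by lra]; nra. }
  assert (B2 : r * r <= r * Rabs (u - t)).
  { rewrite S, E'. pose proof (Rle_abs ((e1 * a + e2 * b) * (u - t))).
    rewrite Rabs_mult in H. pose proof (Rabs_pos (u - t)). nra. }
  rewrite Rabs_minus_sym. pose proof (Rabs_pos (u - t)). nra.
Qed.

Lemma dlip_one (f : R -> R) (B : R) :
  0 <= B ->
  (forall n t, ex_derive_n f n t) ->
  exists M, 0 <= M /\ forall v w, 0 <= v <= B -> 0 <= w <= B ->
    Rabs (Derive f v - Derive f w) <= M * Rabs (v - w).
Proof.
  intros HB Hs.
  assert (C : forall c, 0 <= c <= B -> continuity_pt (fun v => Rabs (Derive (Derive f) v)) c).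
  { intros c _. apply (continuity_pt_comp (Derive (Derive f)) Rabs).
    - apply ex_der_cont. exact (Hs 3%nat c).
    - apply Rcontinuity_abs. }
  destruct (continuity_ab_maj _ 0 B HB C) as [m [Hm Hmb]].
  exists (Rabs (Derive (Derive f) m)). split; [apply Rabs_pos|].
  intros v w Hv Hw.
  destruct (MVT_gen (Derive f) w v (Derive (Derive f))) as [c [Hc E]].
  - intros x _. apply Derive_correct. exact (Hs 2%nat x).
  - intros x _. apply ex_der_cont. exact (Hs 2%nat x).
  - rewrite E, Rabs_mult. apply Rmult_le_compat_r; [apply Rabs_pos|].
    apply Hm. split.
    + apply Rle_trans with (Rmin w v); [apply Rmin_glb; lra | lra].
    + apply Rle_trans with (Rmax w v); [lra | apply Rmax_lub; lra].
Qed.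

Lemma lower_local (gamma : R -> pt) (L M dl : R) :
  smooth_jordan_arclength gamma L ->
  0 <= M -> 0 < dl -> M * dl <= 1/2 ->
  (forall v w, 0 <= v <= 2 * L -> 0 <= w <= 2 * L ->
    Rabs (Derive (fun u => fst (gamma u)) v - Derive (fun u => fst (gamma u)) w) <= M * Rabs (v - w)) ->
  (forall v w, 0 <= v <= 2 * L -> 0 <= w <= 2 * L ->
    Rabs (Derive (fun u => snd (gamma u)) v - Derive (fun u => snd (gamma u)) w) <= M * Rabs (v - w)) ->
  forall t u, 0 <= t <= L -> t <= u <= t + dl -> dl <= L ->
    u - t <= 2 * edist (gamma t) (gamma u).
Proof.
  intros HS HM Hdl HMd LX LY t u Ht Hu HdL.
  destruct HS as [HL [Hx [Hy [Hp [Hinj Hun]]]]].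
  assert (D1 : forall v, ex_derive (fun u => fst (gamma u)) v) by (intro v; exact (Hx 1%nat v)).
  assert (D2 : forall v, ex_derive (fun u => snd (gamma u)) v) by (intro v; exact (Hy 1%nat v)).
  set (e1 := Derive (fun u => fst (gamma u)) t).
  set (e2 := Derive (fun u => snd (gamma u)) t).
  destruct (lin_mvt gamma e1 e2 t u D1 D2) as [c [Hc E]].
  rewrite Rmin_left in Hc by lra. rewrite Rmax_right in Hc by lra.
  pose proof (Hun c) as U. pose proof (Hun t) as Ut. fold e1 e2 in Ut.
  set (a := Derive (fun u => fst (gamma u)) c) in *.
  set (b := Derive (fun u => snd (gamma u)) c) in *.
  assert (A1 : Rabs (a - e1) <= M * dl).
  { apply Rle_trans with (M * Rabs (c - t)).
    - apply LX; lra.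
    - apply Rmult_le_compat_l; auto. rewrite Rabs_pos_eq; lra. }
  assert (A2 : Rabs (b - e2) <= M * dl).
  { apply Rle_trans with (M * Rabs (c - t)).
    - apply LY; lra.
    - apply Rmult_le_compat_l; auto. rewrite Rabs_pos_eq; lra. }
  assert (Q1 : (a - e1) ^ 2 <= 1/4).
  { rewrite <- (pow2_abs (a - e1)). pose proof (Rabs_pos (a - e1)). nra. }
  assert (Q2 : (b - e2) ^ 2 <= 1/4).
  { rewrite <- (pow2_abs (b - e2)). pose proof (Rabs_pos (b - e2)). nra. }
  assert (Dp : 1/2 <= e1 * a + e2 * b) by nra.
  set (dx := fst (gamma u) - fst (gamma t)).
  set (dy := snd (gamma u) - snd (gamma t)).
  assert (E2 : e1 * dx + e2 * dy = (e1 * a + e2 * b) * (u - t)) by (rewrite <- E; unfold dx, dy; ring).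
  unfold edist.
  replace ((fst (gamma t) - fst (gamma u)) ^ 2 + (snd (gamma t) - snd (gamma u)) ^ 2)
    with (dx ^ 2 + dy ^ 2) by (unfold dx, dy; ring).
  assert (S0 : 0 <= dx ^ 2 + dy ^ 2) by nra.
  pose proof (sqrt_sqrt _ S0) as S. pose proof (sqrt_pos (dx ^ 2 + dy ^ 2)) as P.
  set (r := sqrt (dx ^ 2 + dy ^ 2)) in *.
  assert (CS : (e1 * dx + e2 * dy) ^ 2 <= r * r).
  { rewrite S. pose proof (pow2_ge_0 (e1 * dy - e2 * dx)). nra. }
  assert (W : (u - t) / 2 <= e1 * dx + e2 * dy) by nra.
  nra.
Qed.

Lemma lower_bound (gamma : R -> pt) (L : R) :
  smooth_jordan_arclength gamma L ->
  exists dl, 0 < dl /\ dl <= L / 4 /\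
    forall t u, Rabs (u - t) <= dl -> Rabs (u - t) <= 2 * edist (gamma t) (gamma u).
Proof.
  intros HS. pose proof HS as HS'.
  destruct HS' as [HL [Hx [Hy [Hp [Hinj Hun]]]]].
  destruct (dlip_one (fun u => fst (gamma u)) (2 * L)) as [Mx [HMx LX]]; [lra|exact Hx|].
  destruct (dlip_one (fun u => snd (gamma u)) (2 * L)) as [My [HMy LY]]; [lra|exact Hy|].
  set (M := Mx + My).
  set (dl := Rmin (L / 4) (/ (2 * (M + 1)))).
  assert (Hpos : 0 < / (2 * (M + 1))) by (apply Rinv_0_lt_compat; unfold M; lra).
  assert (Hdl : 0 < dl) by (unfold dl; apply Rmin_glb_lt; lra).
  assert (Hdl1 : dl <= L / 4) by apply Rmin_l.
  assert (Hdl2 : dl <= / (2 * (M + 1))) by apply Rmin_r.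
  assert (HMd : M * dl <= 1/2).
  { assert (Hk : (M + 1) * dl <= 1/2).
    { apply Rle_trans with ((M + 1) * / (2 * (M + 1))).
      - apply Rmult_le_compat_l; unfold M in *; lra.
      - right. field. unfold M; lra. }
    assert (0 <= dl) by lra. nra. }
  exists dl. split; [lra|split; [lra|]].
  assert (Main : forall t u, t <= u -> u - t <= dl -> u - t <= 2 * edist (gamma t) (gamma u)).
  { intros t u Htu Hd.
    destruct (reduce_mod L t HL) as [k [t0 [Ht0 Et]]].
    set (u0 := u - IZR k * L).
    assert (Eu : u = u0 + IZR k * L) by (unfold u0; ring).
    rewrite Et, Eu, !(per_Z gamma L Hp k).
    replace (u0 + IZR k * L - (t0 + IZR k * L)) with (u0 - t0) by ring.
    apply (lower_local gamma L M dl HS); try lra.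
    - unfold M; lra.
    - intros v w Hv Hw. apply Rle_trans with (Mx * Rabs (v - w)); [apply LX; auto|].
      apply Rmult_le_compat_r; [apply Rabs_pos|unfold M; lra].
    - intros v w Hv Hw. apply Rle_trans with (My * Rabs (v - w)); [apply LY; auto|].
      apply Rmult_le_compat_r; [apply Rabs_pos|unfold M; lra]. }
  intros t u H.
  destruct (Rle_dec t u) as [Htu|Htu].
  - rewrite Rabs_pos_eq in * by lra. apply Main; lra.
  - rewrite Rabs_left in * by lra. rewrite edist_sym.
    replace (- (u - t)) with (t - u) in * by ring. apply Main; lra.
Qed.

Lemma edist_eq0 p q : edist p q = 0 -> p = q.
Proof.
  unfold edist. intros H. apply sqrt_eq_0 in H; [|pose proof (pow2_ge_0 (fst p - fst q)); pose proof (pow2_ge_0 (snd p - snd q)); lra].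
  destruct p as [p1 p2], q as [q1 q2]; simpl in *.
  pose proof (pow2_ge_0 (p1 - q1)); pose proof (pow2_ge_0 (p2 - q2)).
  assert (p1 = q1) by nra. assert (p2 = q2) by nra. subst; auto.
Qed.

Lemma edist_diff p q p' q' : Rabs (edist p q - edist p' q') <= edist p p' + edist q q'.
Proof.
  pose proof (edist_tri p p' q) as T1. pose proof (edist_tri p' q' q) as T2.
  pose proof (edist_tri p' p q') as T3. pose proof (edist_tri p q q') as T4.
  rewrite (edist_sym p' p) in T3. rewrite (edist_sym q' q) in T2.
  apply Rabs_le. lra.
Qed.

Lemma lip_cont (f : R -> R) (K x : R) : 0 <= K ->
  (forall a b, Rabs (f a - f b) <= K * Rabs (a - b)) -> continuity_pt f x.
Proof.
  intros HK Hf. unfold continuity_pt, continue_in, limit1_in, limit_in.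
  intros eps He. exists (eps / (K + 1)). split.
  - apply Rdiv_lt_0_compat; lra.
  - intros y [_ Hy]. simpl in *. unfold R_dist in *.
    apply Rle_lt_trans with (K * Rabs (y - x)); [apply Hf|].
    assert (E : eps = (eps / (K + 1)) * (K + 1)) by (field; lra).
    pose proof (Rabs_pos (y - x)). nra.
Qed.

Lemma IZR_strict (k : Z) : 0 < IZR k -> IZR k < 1 -> False.
Proof.
  intros H1 H2. apply lt_IZR in H1. apply lt_IZR in H2. lia.
Qed.

Lemma sep (gamma : R -> pt) (L : R) :
  smooth_jordan_arclength gamma L ->
  forall dl, 0 < dl -> dl <= L / 4 ->
  exists eta, 0 < eta /\ forall t w, dl <= w <= L - dl -> eta <= edist (gamma t) (gamma (t + w)).
Proof.
  intros HS dl Hdl HdL. pose proof HS as HS'.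
  destruct HS' as [HL [Hx [Hy [Hp [Hinj Hun]]]]].
  set (h := fun t w => edist (gamma t) (gamma (t + w))).
  assert (Hw : forall t w w', Rabs (h t w - h t w') <= 1 * Rabs (w - w')).
  { intros t w w'. unfold h. eapply Rle_trans; [apply edist_diff|].
    rewrite edist_refl, Rplus_0_l, Rmult_1_l.
    eapply Rle_trans; [apply (lip1 gamma L HS)|]. right. f_equal. ring. }
  assert (Ht : forall t t' w, Rabs (h t w - h t' w) <= 2 * Rabs (t - t')).
  { intros t t' w. unfold h. eapply Rle_trans; [apply edist_diff|].
    pose proof (lip1 gamma L HS t t'). pose proof (lip1 gamma L HS (t + w) (t' + w)).
    replace (t + w - (t' + w)) with (t - t') in * by ring. lra. }
  assert (exm : forall t, exists w, dl <= w <= L - dl /\ forall w', dl <= w' <= L - dl -> h t w <= h t w').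
  { intros t. destruct (continuity_ab_min (h t) dl (L - dl)) as [w [H1 H2]]; [lra| |].
    - intros c _. apply (lip_cont _ 1); [lra|]. apply Hw.
    - exists w. auto. }
  set (ws := fun t => proj1_sig (constructive_indefinite_description _ (exm t))).
  assert (Hws : forall t, dl <= ws t <= L - dl /\ forall w', dl <= w' <= L - dl -> h t (ws t) <= h t w').
  { intros t. unfold ws. destruct (constructive_indefinite_description _ (exm t)) as [w Pw]. exact Pw. }
  set (m := fun t => h t (ws t)).
  assert (Hm : forall a b, Rabs (m a - m b) <= 2 * Rabs (a - b)).
  { intros a b. unfold m. destruct (Hws a) as [Ra Ma]. destruct (Hws b) as [Rb Mb].
    pose proof (Ma (ws b) Rb). pose proof (Mb (ws a) Ra).
    pose proof (Ht a b (ws b)). pose proof (Ht b a (ws a)).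
    rewrite (Rabs_minus_sym b a) in H2.
    apply Rabs_le. apply Rabs_le_between in H1. apply Rabs_le_between in H2. lra. }
  destruct (continuity_ab_min m 0 L) as [t0 [M1 M2]]; [lra| |].
  { intros c _. apply (lip_cont _ 2); [lra|]. apply Hm. }
  exists (m t0). split.
  - destruct (Hws t0) as [R0 _].
    assert (P : 0 <= m t0) by (unfold m, h; apply edist_ge0).
    destruct P as [P|P]; auto. exfalso. symmetry in P.
    apply edist_eq0 in P.
    destruct (same_point gamma L HS _ _ (eq_sym P)) as [k Ek].
    assert (E2 : ws t0 = IZR k * L) by lra.
    apply (IZR_strict k).
    + apply (Rmult_lt_reg_r L); lra.
    + apply (Rmult_lt_reg_r L); lra.
  - intros t w Hw0.
    destruct (reduce_mod L t HL) as [k [t1 [Ht1 Et]]].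
    apply Rle_trans with (m t1); [apply M1; lra|].
    apply Rle_trans with (h t1 w); [apply (proj2 (Hws t1)); auto|].
    unfold h. rewrite Et. replace (t1 + IZR k * L + w) with ((t1 + w) + IZR k * L) by ring.
    rewrite !(per_Z gamma L Hp). lra.
Qed.

Lemma far (gamma : R -> pt) (L dl eta : R) :
  smooth_jordan_arclength gamma L ->
  (forall t w, dl <= w <= L - dl -> eta <= edist (gamma t) (gamma (t + w))) ->
  forall t u, (forall k, dl < Rabs (u + IZR k * L - t)) -> eta <= edist (gamma t) (gamma u).
Proof.
  intros HS Hsep t u Hk. pose proof HS as [HL [_ [_ [Hp _]]]].
  destruct (reduce_mod L (u - t) HL) as [k [w [Hw E]]].
  pose proof (Hk (- k)%Z) as K1. pose proof (Hk (- k - 1)%Z) as K2.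
  rewrite opp_IZR in K1. rewrite minus_IZR, opp_IZR in K2.
  replace (u + - IZR k * L - t) with w in K1 by lra.
  replace (u + (- IZR k - 1) * L - t) with (w - L) in K2 by lra.
  rewrite Rabs_pos_eq in K1 by lra. rewrite Rabs_left in K2 by lra.
  replace u with ((t + w) + IZR k * L) by lra. rewrite (per_Z gamma L Hp).
  apply Hsep. lra.
Qed.

Lemma lat_below (L tau x : R) : 0 < L ->
  exists k, tau + IZR k * L <= x /\ forall j, tau + IZR j * L <= x -> tau + IZR j * L <= tau + IZR k * L.
Proof.
  intros HL. set (r := (x - tau) / L).
  assert (Er : x - tau = r * L) by (unfold r; field; lra).
  destruct (base_Int_part r) as [B1 B2].
  exists (Int_part r). split; [nra|].
  intros j Hj.
  assert (Hj' : IZR j <= r) by (apply (Rmult_le_reg_r L); lra).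
  assert (IZR j < IZR (Int_part r + 1)) by (rewrite plus_IZR; lra).
  apply lt_IZR in H. assert (j <= Int_part r)%Z by lia. apply IZR_le in H0. nra.
Qed.

Lemma lat_above (L tau y : R) : 0 < L ->
  exists k, y < tau + IZR k * L /\ forall j, y < tau + IZR j * L -> tau + IZR k * L <= tau + IZR j * L.
Proof.
  intros HL. set (r := (y - tau) / L).
  assert (Er : y - tau = r * L) by (unfold r; field; lra).
  destruct (base_Int_part r) as [B1 B2].
  exists (Int_part r + 1)%Z. rewrite plus_IZR. split; [nra|].
  intros j Hj.
  assert (Hj' : r < IZR j) by (apply (Rmult_lt_reg_r L); lra).
  assert (IZR (Int_part r) < IZR j) by lra.
  apply lt_IZR in H. assert (Int_part r + 1 <= j)%Z by lia. apply IZR_le in H0.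
  rewrite plus_IZR in H0. nra.
Qed.

Lemma single_below (gamma : R -> pt) (L : R) :
  smooth_jordan_arclength gamma L -> forall a, on_curve gamma a -> forall x,
  exists s, gamma s = a /\ s <= x /\ forall v, gamma v = a -> v <= x -> v <= s.
Proof.
  intros HS a [tau Ha] x. pose proof HS as [HL [_ [_ [Hp _]]]].
  destruct (lat_below L tau x HL) as [k [K1 K2]].
  exists (tau + IZR k * L). split; [rewrite (per_Z gamma L Hp); auto|split; auto].
  intros v Hv Hvx. rewrite <- Ha in Hv. destruct (same_point gamma L HS _ _ Hv) as [j Ej].
  subst v. apply K2; auto.
Qed.

Lemma single_above (gamma : R -> pt) (L : R) :
  smooth_jordan_arclength gamma L -> forall a, on_curve gamma a -> forall y,
  exists s, gamma s = a /\ y < s /\ forall v, gamma v = a -> y < v -> s <= v.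
Proof.
  intros HS a [tau Ha] y. pose proof HS as [HL [_ [_ [Hp _]]]].
  destruct (lat_above L tau y HL) as [k [K1 K2]].
  exists (tau + IZR k * L). split; [rewrite (per_Z gamma L Hp); auto|split; auto].
  intros v Hv Hvx. rewrite <- Ha in Hv. destruct (same_point gamma L HS _ _ Hv) as [j Ej].
  subst v. apply K2; auto.
Qed.

Lemma max_below (gamma : R -> pt) (L : R) :
  smooth_jordan_arclength gamma L -> forall A, (forall a, In a A -> on_curve gamma a) -> A <> nil ->
  forall x, exists s, In (gamma s) A /\ s <= x /\ forall v, In (gamma v) A -> v <= x -> v <= s.
Proof.
  intros HS A. induction A as [|a A' IH]; intros HA Hne x; [congruence|].
  destruct (single_below gamma L HS a (HA a (or_introl eq_refl)) x) as [sa [Ea [Sa Ma]]].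
  destruct A' as [|b A''].
  - exists sa. split; [left; auto|split; auto].
    intros v [Hv|[]] Hvx. apply Ma; auto.
  - destruct (IH (fun a0 H => HA a0 (or_intror H)) ltac:(discriminate) x) as [s' [E' [S' M']]].
    destruct (Rle_dec sa s') as [Hle|Hle].
    + exists s'. split; [right; auto|split; auto].
      intros v [Hv|Hv] Hvx; [apply Rle_trans with sa; auto; apply Ma; auto|apply M'; auto].
    + exists sa. split; [left; auto|split; auto].
      intros v [Hv|Hv] Hvx; [apply Ma; auto|apply Rle_trans with s'; [apply M'; auto|lra]].
Qed.

Lemma min_above (gamma : R -> pt) (L : R) :
  smooth_jordan_arclength gamma L -> forall A, (forall a, In a A -> on_curve gamma a) -> A <> nil ->
  forall y, exists s, In (gamma s) A /\ y < s /\ forall v, In (gamma v) A -> y < v -> s <= v.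
Proof.
  intros HS A. induction A as [|a A' IH]; intros HA Hne y; [congruence|].
  destruct (single_above gamma L HS a (HA a (or_introl eq_refl)) y) as [sa [Ea [Sa Ma]]].
  destruct A' as [|b A''].
  - exists sa. split; [left; auto|split; auto].
    intros v [Hv|[]] Hvx. apply Ma; auto.
  - destruct (IH (fun a0 H => HA a0 (or_intror H)) ltac:(discriminate) y) as [s' [E' [S' M']]].
    destruct (Rle_dec sa s') as [Hle|Hle].
    + exists sa. split; [left; auto|split; auto].
      intros v [Hv|Hv] Hvx; [apply Ma; auto|apply Rle_trans with s'; [lra|apply M'; auto]].
    + exists s'. split; [right; auto|split; auto].
      intros v [Hv|Hv] Hvx; [apply Rle_trans with sa; [lra|apply Ma; auto]|apply M'; auto].
Qed.

Lemma arc_exists (gamma : R -> pt) (L : R) :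
  smooth_jordan_arclength gamma L -> forall A, (forall a, In a A -> on_curve gamma a) -> A <> nil ->
  forall x, exists s s', s <= x < s' /\ s' <= s + L /\ In (gamma s) A /\ In (gamma s') A /\
    (forall v, s < v < s' -> ~ In (gamma v) A).
Proof.
  intros HS A HA Hne x. pose proof HS as [HL [_ [_ [Hp _]]]].
  destruct (max_below gamma L HS A HA Hne x) as [s [Es [Sx Ms]]].
  destruct (min_above gamma L HS A HA Hne s) as [s' [Es' [Ss Ms']]].
  exists s, s'. split; [split; auto|].
  { destruct (Rlt_dec x s') as [?|N]; auto. exfalso. assert (s' <= s) by (apply Ms; auto; lra). lra. }
  split; [apply Ms'; [rewrite Hp; auto|lra]|].
  split; auto. split; auto.
  intros v Hv Hin. assert (s' <= v) by (apply Ms'; auto; lra). lra.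
Qed.

Theorem lemma4p2 (gamma : R -> pt) (L : R) :
  smooth_jordan_arclength gamma L ->
  exists nu : R, 0 < nu /\
    forall (X : Type) (d : X -> X -> R), is_metric d -> geodesic_space d ->
    forall (A : list pt), (forall a, In a A -> on_curve gamma a) ->
    dense_in_curve gamma A nu ->
    forall (lam : R) (phi : pt -> X),
      lipschitz_on d (fun a => In a A) phi lam ->
    forall phibar : pt -> X,
      pw_geodesic_ext d gamma L A phi phibar ->
      lipschitz_on d (on_curve gamma) phibar (3 * lam).
Proof.
  intros HS. pose proof HS as HS'. destruct HS' as [HL [_ [_ [Hp _]]]].
  destruct (lower_bound gamma L HS) as [dl [Hdl [HdL Hlow]]].
  destruct (sep gamma L HS dl Hdl HdL) as [eta [Heta Hsep]].
  pose proof (far gamma L dl eta HS Hsep) as Hfar.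
  exists (eta / 8). split; [lra|].
  intros X d [Hd0 [Hdeq [Hdsym Hdtri]]] _ A HA Hdense lam phi Hlip phibar [_ Hpw].
  set (nu := eta / 8).
  assert (Hne : A <> nil).
  { destruct (Hdense (gamma 0) (ex_intro _ 0 eq_refl)) as [a [Ha _]].
    intros E; rewrite E in Ha; destruct Ha. }
  assert (Hlam : 0 <= lam).
  { destruct (Hdense (gamma 0) (ex_intro _ 0 eq_refl)) as [a [Ha Da]].
    destruct (Hdense (gamma (L / 2)) (ex_intro _ (L / 2) eq_refl)) as [b [Hb Db]].
    assert (F : eta <= edist (gamma 0) (gamma (L / 2))).
    { apply Hfar. intros k.
      destruct (Z_le_gt_dec 0 k) as [Hk|Hk].
      - apply IZR_le in Hk. rewrite Rabs_pos_eq; nra.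
      - assert (Hk' : (k <= -1)%Z) by lia. apply IZR_le in Hk'. rewrite Rabs_left; nra. }
    pose proof (edist_tri (gamma 0) a (gamma (L / 2))) as T1.
    pose proof (edist_tri a b (gamma (L / 2))) as T2.
    rewrite (edist_sym b) in T2.
    assert (Pab : 0 < edist a b) by (unfold nu in *; lra).
    pose proof (Hlip a b Ha Hb). pose proof (Hd0 (phi a) (phi b)). nra. }
  assert (Hlen : forall s s', s < s' -> (forall v, s < v < s' -> ~ In (gamma v) A) -> s' - s <= 4 * nu).
  { intros s s' Hss Hno. set (m := (s + s') / 2).
    destruct (Hdense (gamma m) (ex_intro _ m eq_refl)) as [a [Ha Da]].
    destruct (HA a Ha) as [tau Etau].
    destruct (classic (exists k, Rabs (tau + IZR k * L - m) <= dl)) as [[k Hk]|Hk].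
    - set (v := tau + IZR k * L) in *.
      assert (Gv : gamma v = a) by (unfold v; rewrite (per_Z gamma L Hp); auto).
      pose proof (Hlow m v Hk) as Lo. rewrite Gv in Lo.
      assert (Nv : ~ (s < v < s')) by (intros Hv; apply (Hno v Hv); rewrite Gv; auto).
      destruct (Rle_dec v s) as [Hv|Hv].
      + rewrite Rabs_left in Lo by (unfold m; lra). unfold m, nu in *; lra.
      + assert (s' <= v) by (destruct (Rle_dec s' v); auto; exfalso; apply Nv; lra).
        rewrite Rabs_pos_eq in Lo by (unfold m; lra). unfold m, nu in *; lra.
    - exfalso.
      assert (F : eta <= edist (gamma m) (gamma tau)).
      { apply Hfar. intros k. apply Rnot_le_lt. intros H. apply Hk. exists k. auto. }
      rewrite Etau in F. unfold nu in *; lra. }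
  assert (Harc : forall x, exists s s', s <= x <= s' /\ s' - s <= 4 * nu /\
      In (gamma s) A /\ In (gamma s') A /\ (forall v, s < v < s' -> ~ In (gamma v) A) /\
      (forall v w, s <= v <= s' -> s <= w <= s' -> d (phibar (gamma v)) (phibar (gamma w)) <= lam * Rabs (v - w)) /\
      (forall v, s <= v <= s' -> d (phibar (gamma v)) (phi (gamma s)) <= lam * (v - s)) /\
      (forall v, s <= v <= s' -> d (phibar (gamma v)) (phi (gamma s')) <= lam * (s' - v))).
  { intros x. destruct (arc_exists gamma L HS A HA Hne x) as [s [s' [Hx [HsL [Hs [Hs' Hno]]]]]].
    destruct (Hpw s s' ltac:(lra) HsL Hs Hs' Hno) as [g [[G0 [G1 Gd]] Gv]].
    assert (HD : d (phi (gamma s)) (phi (gamma s')) <= lam * (s' - s)).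
    { apply Rle_trans with (lam * edist (gamma s) (gamma s')); [apply Hlip; auto|].
      apply Rmult_le_compat_l; auto. pose proof (lip1 gamma L HS s s').
      rewrite Rabs_left in H by lra. lra. }
    set (D := d (phi (gamma s)) (phi (gamma s'))) in *.
    assert (HD0 : 0 <= D) by apply Hd0.
    set (r := fun v => (v - s) / (s' - s)).
    assert (Hr : forall v, s <= v <= s' -> 0 <= r v <= 1).
    { intros v Hv. unfold r. split.
      - apply Rdiv_le_0_compat; lra.
      - replace ((v - s) / (s' - s)) with (1 - (s' - v) / (s' - s)) by (field; lra).
        assert (0 <= (s' - v) / (s' - s)) by (apply Rdiv_le_0_compat; lra). lra. }
    assert (Hrm : forall v w, (r v - r w) * (s' - s) = v - w) by (intros; unfold r; field; lra).
    exists s, s'. split; [lra|]. split; [apply Hlen; auto; lra|].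
    split; auto. split; auto. split; auto. split; [|split].
    - intros v w Hv Hw. rewrite (Gv v Hv), (Gv w Hw). fold (r v) (r w).
      rewrite Gd by (apply Hr; auto).
      rewrite <- (Hrm v w), Rabs_mult, (Rabs_pos_eq (s' - s)) by lra.
      pose proof (Rabs_pos (r v - r w)). nra.
    - intros v Hv. rewrite (Gv v Hv). fold (r v). rewrite <- G0.
      rewrite Gd by (try apply Hr; auto; lra). rewrite Rminus_0_r.
      rewrite Rabs_pos_eq by (apply Hr; auto).
      replace (v - s) with (r v * (s' - s)) by (unfold r; field; lra).
      pose proof (Hr v Hv). nra.
    - intros v Hv. rewrite (Gv v Hv). fold (r v). rewrite <- G1.
      rewrite Gd by (try apply Hr; auto; lra).
      rewrite Rabs_left1 by (pose proof (Hr v Hv); lra).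
      replace (s' - v) with ((1 - r v) * (s' - s)) by (unfold r; field; lra).
      pose proof (Hr v Hv). nra. }
  assert (Case1 : forall t u, t <= u -> d (phibar (gamma t)) (phibar (gamma u)) <= lam * (u - t)).
  { intros t u Htu.
    destruct (Harc t) as [s1 [s1' [Ht1 [Len1 [In1 [In1' [No1 [Same1 [Left1 Right1]]]]]]]]].
    destruct (Rle_dec u s1') as [Hu|Hu].
    - eapply Rle_trans; [apply Same1; lra|].
      rewrite Rabs_left1 by lra. lra.
    - destruct (Harc u) as [s2 [s2' [Ht2 [Len2 [In2 [In2' [No2 [Same2 [Left2 Right2]]]]]]]]].
      assert (H12 : s1' <= s2).
      { destruct (Rle_dec s1' s2) as [?|N]; auto. exfalso. apply (No2 s1'); auto. lra. }
      pose proof (Hdtri (phibar (gamma t)) (phi (gamma s1')) (phibar (gamma u))) as T1.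
      pose proof (Hdtri (phi (gamma s1')) (phi (gamma s2)) (phibar (gamma u))) as T2.
      pose proof (Right1 t ltac:(lra)) as B1.
      pose proof (Left2 u ltac:(lra)) as B3. rewrite Hdsym in B3.
      assert (B2 : d (phi (gamma s1')) (phi (gamma s2)) <= lam * (s2 - s1')).
      { apply Rle_trans with (lam * edist (gamma s1') (gamma s2)); [apply Hlip; auto|].
        apply Rmult_le_compat_l; auto. pose proof (lip1 gamma L HS s1' s2).
        rewrite Rabs_left1 in H by lra. lra. }
      nra. }
  assert (Case2 : forall t u, d (phibar (gamma t)) (phibar (gamma u)) <= lam * (edist (gamma t) (gamma u) + 16 * nu)).
  { intros t u.
    destruct (Harc t) as [s1 [s1' [Ht1 [Len1 [In1 [In1' [No1 [Same1 [Left1 Right1]]]]]]]]].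
    destruct (Harc u) as [s2 [s2' [Ht2 [Len2 [In2 [In2' [No2 [Same2 [Left2 Right2]]]]]]]]].
    pose proof (Hdtri (phibar (gamma t)) (phi (gamma s1)) (phibar (gamma u))) as T1.
    pose proof (Hdtri (phi (gamma s1)) (phi (gamma s2)) (phibar (gamma u))) as T2.
    pose proof (Left1 t ltac:(lra)) as B1.
    pose proof (Left2 u ltac:(lra)) as B3. rewrite Hdsym in B3.
    pose proof (Hlip _ _ In1 In2) as B2.
    pose proof (edist_tri (gamma s1) (gamma t) (gamma s2)) as E1.
    pose proof (edist_tri (gamma t) (gamma u) (gamma s2)) as E2.
    pose proof (lip1 gamma L HS s1 t) as E3. pose proof (lip1 gamma L HS u s2) as E4.
    rewrite Rabs_left1 in E3 by lra. rewrite Rabs_pos_eq in E4 by lra.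
    assert (edist (gamma s1) (gamma s2) <= edist (gamma t) (gamma u) + 16 * nu - 2 * (t - s1) - 2 * (u - s2) + (t - s1) + (u - s2) + 8 * nu) by lra.
    nra. }
  intros p q [t0 Hp0] [u0 Hq0]. subst p q.
  destruct (classic (exists k, Rabs (u0 + IZR k * L - t0) <= dl)) as [[k Hk]|Hk].
  - set (u := u0 + IZR k * L) in *.
    assert (Gu : gamma u = gamma u0) by (unfold u; apply (per_Z gamma L Hp)).
    rewrite <- Gu. pose proof (Hlow t0 u Hk) as Lo.
    pose proof (edist_ge0 (gamma t0) (gamma u)).
    destruct (Rle_dec t0 u) as [H1|H1].
    + rewrite Rabs_pos_eq in Lo by lra. pose proof (Case1 t0 u H1). nra.
    + rewrite Rabs_left in Lo by lra. pose proof (Case1 u t0 ltac:(lra)).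
      rewrite Hdsym. nra.
  - assert (F : eta <= edist (gamma t0) (gamma u0)).
    { apply Hfar. intros k. apply Rnot_le_lt. intros H. apply Hk. exists k. auto. }
    pose proof (Case2 t0 u0). unfold nu in *. nra.
Qed.
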